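(* Let $F=\mathbb{F}_{q^u}$ ($u\in\{1,2\}$), let $V$ be a finite-dimensional vector space over $F$, let $\beta$ be a non-degenerate alternating, symmetric or hermitian form on $V$, and let $X\in\mathcal{C}(\beta)$ have minimal polynomial $f_1^{e_1}\cdots f_h^{e_h}$, where $f_1,\ldots,f_h\in\Phi$ are distinct. Let $V_i=\ker(f_i(X)^{e_i})$. Let $\gamma$ be a form on $V$ of the form $\gamma(v,w)=\beta(vg,wg)$ for some $g\in{\rm GL}(V)$, such that $\gamma(vX,wX)=\gamma(v,w)$ for all $v,w$. If $f_i\neq f_j^*$, then $\gamma(v,w)=0$ for all $v\in V_i$, $w\in V_j$ (equivalently, the $(i,j)$ block of the matrix of $\gamma$ with respect to a basis that is a union of bases of the $V_i$ is zero).
   Context: $\lambda\mapsto\bar\lambda=\lambda^q$ is the automorphism of $F$ of order $u$; forms are left-linear with $\beta(w,v)=\overline{\beta(v,w)}$ (alternating/symmetric for $u=1$, hermitian for $u=2$); $\mathcal{C}(\beta)=\{g\in{\rm GL}(V):\beta(vg,wg)=\beta(v,w)\}$. For monic $f=t^d+\cdots+a_0$ with $a_0\ne0$, $f^*(t)=\bar a_0^{-1}t^d\bar f(t^{-1})$. $\Phi$ is the union of: monic irreducible self-dual ($f=f^*$) polynomials, and products $gg^*$ with $g$ monic irreducible and $g\ne g^*$. *)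

(* Defs.v *)
From mathcomp Require Import all_boot all_order all_algebra.
Set Implicit Arguments. Unset Strict Implicit. Unset Printing Implicit Defensive.
Import GRing.Theory.
Local Open Scope ring_scope.

(* F = F_{q^u}; the field automorphism lambda |-> bar lambda = lambda^q. *)
Definition fbar (F : finFieldType) (q : nat) (x : F) : F := x ^+ q.

(* f^*(t) = bar(a_0)^{-1} t^d bar f(t^{-1}), d = deg f:
   the coefficient of t^i is bar(a_0)^{-1} bar(a_{d-i}). *)
Definition pstar (F : finFieldType) (q : nat) (f : {poly F}) : {poly F} :=
  (fbar q (f`_0))^-1 *: \poly_(i < size f) fbar q (f`_((size f).-1 - i)).

(* Phi: monic irreducible self-dual polynomials, and products g g^* with g
   monic irreducible, g <> g^*.  (f^* is only defined when f(0) <> 0.) *)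
Definition inPhi (F : finFieldType) (q : nat) (f : {poly F}) : Prop :=
  (f \is monic /\ irreducible_poly f /\ f`_0 != 0 /\ f = pstar q f) \/
  (exists g : {poly F}, [/\ g \is monic, irreducible_poly g, g`_0 != 0,
      g <> pstar q g & f = g * pstar q g]).

(* Forms on V = 'rV[F]_n (vectors are rows, matrices act on the right):
   left-linear, and semilinear in the second argument w.r.t. the bar map. *)
Definition sesqui_form (F : finFieldType) (q n : nat)
  (b : 'rV[F]_n -> 'rV[F]_n -> F) : Prop :=
  (forall a v v' w, b (a *: v + v') w = a * b v w + b v' w) /\
  (forall a v w w', b v (a *: w + w') = fbar q a * b v w + b v w').

Definition is_form (F : finFieldType) (q u n : nat)
  (b : 'rV[F]_n -> 'rV[F]_n -> F) : Prop :=
  sesqui_form q b /\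
  [\/ u = 1%N /\ (forall v, b v v = 0),
      u = 1%N /\ (forall v w, b w v = b v w)
    | u = 2%N /\ (forall v w, b w v = fbar q (b v w))].

Definition nondeg_form (F : finFieldType) (n : nat)
  (b : 'rV[F]_n -> 'rV[F]_n -> F) : Prop :=
  forall v, (forall w, b v w = 0) -> v = 0.

Definition in_isom_group (F : finFieldType) (n : nat)
  (b : 'rV[F]_n -> 'rV[F]_n -> F) (g : 'M[F]_n) : Prop :=
  g \in unitmx /\ forall v w, b (v *m g) (w *m g) = b v w.

(* Main.v *)
Require Import Defs.
From mathcomp Require Import all_boot all_order all_algebra finfield zify.
From Stdlib Require Import Classical.
Set Implicit Arguments. Unset Strict Implicit. Unset Printing Implicit Defensive.
Import GRing.Theory.
Local Open Scope ring_scope.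
Section Bar.
Variables (F : finFieldType) (q : nat).
Local Notation bar := (@fbar F q).
Hypothesis badd : forall x y : F, bar (x + y) = bar x + bar y.
Hypothesis binv : forall x : F, bar (bar x) = x.

Lemma bar0 : bar 0 = 0.
Proof. by apply: (@addrI _ (bar 0)); rewrite -badd !addr0. Qed.
Lemma bar1 : bar 1 = 1.
Proof. by rewrite /fbar expr1n. Qed.
Lemma barM x y : bar (x * y) = bar x * bar y.
Proof. by rewrite /fbar exprMn. Qed.
Lemma bar_eq0 x : (bar x == 0) = (x == 0).
Proof. apply/eqP/eqP => [h|->]; last exact bar0. by rewrite -(binv x) h bar0. Qed.
Lemma barV x : bar (x^-1) = (bar x)^-1.
Proof. by rewrite /fbar exprVn. Qed.
Lemma bar_sum I (r : seq I) P (G : I -> F) :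
  bar (\sum_(i <- r | P i) G i) = \sum_(i <- r | P i) bar (G i).
Proof. exact: (big_morph _ badd bar0). Qed.

Definition Rv (d : nat) (p : {poly F}) : {poly F} :=
  \poly_(i < d.+1) bar (p`_(d - i)).

Lemma coef_Rv d p i : (Rv d p)`_i = if (i < d.+1)%N then bar p`_(d - i) else 0.
Proof. by rewrite coef_poly. Qed.

Lemma RvD d a p p' : Rv d (a *: p + p') = bar a *: Rv d p + Rv d p'.
Proof.
apply/polyP=> i; rewrite coefD coefZ !coef_Rv; case: ifP => _; last by rewrite mulr0 addr0.
by rewrite coefD coefZ badd barM.
Qed.
Lemma Rv0 d : Rv d 0 = 0.
Proof. by apply/polyP=> i; rewrite coef_Rv coef0 bar0 coef0; case: ifP. Qed.
Lemma RvZ d a p : Rv d (a *: p) = bar a *: Rv d p.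
Proof. by rewrite -[a *: p]addr0 RvD Rv0 addr0. Qed.
Lemma Rv_sum d m (G : 'I_m -> {poly F}) : Rv d (\sum_(i < m) G i) = \sum_(i < m) Rv d (G i).
Proof.
elim: m G => [|m IH] G; first by rewrite !big_ord0 Rv0.
by rewrite !big_ord_recr /= -IH -[X in Rv d (X + _)]scale1r RvD bar1 scale1r.
Qed.
Lemma RvX d a : (a <= d)%N -> Rv d 'X^a = 'X^(d - a).
Proof.
move=> ad; apply/polyP=> i; rewrite coef_Rv !coefXn.
case: ifP => hi.
  have -> : (d - i == a)%N = (i == d - a)%N by apply/eqP/eqP; lia.
  by case: (i == d - a)%N; rewrite ?bar1 ?bar0.
by have -> : (i == d - a)%N = false by apply/eqP; lia.
Qed.

Lemma poly_expand d (p : {poly F}) : (size p <= d.+1)%N ->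
  p = \sum_(a < d.+1) p`_a *: 'X^a.
Proof.
move=> hs; rewrite -poly_def; apply/polyP=> i; rewrite coef_poly.
case: ifP => // /negbT; rewrite -leqNgt => h; apply: nth_default; exact: leq_trans h.
Qed.

Lemma Rv_expand d (p : {poly F}) : (size p <= d.+1)%N ->
  Rv d p = \sum_(a < d.+1) bar p`_a *: 'X^(d - a).
Proof.
move=> hs; rewrite {1}(poly_expand hs) Rv_sum; apply: eq_bigr => a _.
by rewrite RvZ RvX // -ltnS.
Qed.

Lemma RvM d1 d2 (p p' : {poly F}) : (size p <= d1.+1)%N -> (size p' <= d2.+1)%N ->
  Rv (d1 + d2) (p * p') = Rv d1 p * Rv d2 p'.
Proof.
move=> h1 h2; rewrite (Rv_expand h1) (Rv_expand h2).
rewrite {1}(poly_expand h1) {1}(poly_expand h2) big_distrl Rv_sum /=.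
rewrite big_distrl /=; apply: eq_bigr => a _.
rewrite big_distrr Rv_sum big_distrr /=; apply: eq_bigr => b _.
rewrite -scalerAl -scalerAr scalerA -scalerAl -scalerAr scalerA -!exprD RvZ barM RvX.
  congr (_ *: 'X^_); have := ltn_ord a; have := ltn_ord b; lia.
have := ltn_ord a; have := ltn_ord b; lia.
Qed.

Lemma RvK d (p : {poly F}) : (size p <= d.+1)%N -> Rv d (Rv d p) = p.
Proof.
move=> hs; apply/polyP=> i; rewrite !coef_Rv; case: ifP => hi.
  rewrite ifT; last by lia.
  by rewrite binv; congr (p`_ _); lia.
by rewrite nth_default // (leq_trans hs) // leqNgt hi.
Qed.


Lemma size_Rv d (p : {poly F}) : p`_0 != 0 -> size (Rv d p) = d.+1.
Proof. by move=> h; rewrite size_poly_eq //= subnn bar_eq0. Qed.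

Lemma pstarE (p : {poly F}) : p != 0 ->
  pstar q p = (bar p`_0)^-1 *: Rv (size p).-1 p.
Proof. by move=> /polySpred hs; rewrite /pstar /Rv -hs. Qed.

Lemma pstar_size (p : {poly F}) : p`_0 != 0 -> size (pstar q p) = size p.
Proof.
move=> h; have pn0 : p != 0 by apply: contraNneq h => ->; rewrite coef0.
rewrite pstarE // size_scale ?size_Rv -?polySpred //.
by rewrite invr_eq0 bar_eq0.
Qed.

Lemma pstar_monic (p : {poly F}) : p`_0 != 0 -> pstar q p \is monic.
Proof.
move=> h; have pn0 : p != 0 by apply: contraNneq h => ->; rewrite coef0.
rewrite pstarE // monicE lead_coefZ lead_coefE size_Rv // coef_Rv leqnn subnn.
by rewrite mulVf // bar_eq0.
Qed.

Lemma pstar_coef0 (p : {poly F}) : p`_0 != 0 -> (pstar q p)`_0 != 0.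
Proof.
move=> h; have pn0 : p != 0 by apply: contraNneq h => ->; rewrite coef0.
rewrite pstarE // coefZ coef_Rv /= subn0 mulf_neq0 ?invr_eq0 ?bar_eq0 //.
by rewrite -lead_coefE lead_coef_eq0.
Qed.

Lemma pstarK (p : {poly F}) : p \is monic -> p`_0 != 0 -> pstar q (pstar q p) = p.
Proof.
move=> mp h; have pn0 : p != 0 by apply: contraNneq h => ->; rewrite coef0.
have pn0' : pstar q p != 0 by rewrite -size_poly_gt0 pstar_size // size_poly_gt0.
rewrite (pstarE pn0') pstar_size // (pstarE pn0) RvZ RvK; last by rewrite -polySpred.
rewrite coefZ coef_Rv /= subn0 -lead_coefE (monicP mp) bar1 mulr1.
by rewrite scalerA barV binv mulVf ?scale1r // invr_eq0.
Qed.

Lemma pstarM (p p' : {poly F}) : p`_0 != 0 -> p'`_0 != 0 ->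
  pstar q (p * p') = pstar q p * pstar q p'.
Proof.
move=> h h'; have pn0 : p != 0 by apply: contraNneq h => ->; rewrite coef0.
have pn0' : p' != 0 by apply: contraNneq h' => ->; rewrite coef0.
have ppn0 : p * p' != 0 by rewrite mulf_neq0.
rewrite !pstarE // -scalerAl -scalerAr scalerA coef0M barM invfM.
congr (_ *: _); rewrite size_mul //.
rewrite -RvM; [|by rewrite -polySpred|by rewrite -polySpred]; congr Rv.
rewrite (polySpred pn0) (polySpred pn0') /=; lia.
Qed.

Lemma pstarX (p : {poly F}) k : p`_0 != 0 -> pstar q (p ^+ k) = pstar q p ^+ k.
Proof.
move=> h; elim: k => [|k IH].
  rewrite !expr0 /pstar size_poly1 coef1 /= bar1 invr1 scale1r.
  by apply/polyP=> i; rewrite coef_poly coef1; case: i => [|i] //=; rewrite coef1 bar1.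
rewrite !exprS pstarM ?IH //.
elim: k {IH} => [|k IH]; first by rewrite expr0 coef1 oner_neq0.
by rewrite exprS coef0M mulf_neq0.
Qed.

End Bar.
Section Phi.
Variables (F : finFieldType) (q : nat).
Local Notation bar := (@fbar F q).
Hypothesis badd : forall x y : F, bar (x + y) = bar x + bar y.
Hypothesis binv : forall x : F, bar (bar x) = x.

Lemma inPhi_props (f : {poly F}) : inPhi q f ->
  [/\ f \is monic, f`_0 != 0 & pstar q f = f].
Proof.
case=> [[m [_ [h0 e]]] | [g [mg ig g0 gn ->]]]; first by split.
have g0' := pstar_coef0 badd binv g0.
split; first by rewrite monicMl // pstar_monic.
  by rewrite coef0M mulf_neq0.
by rewrite pstarM // pstarK // mulrC.
Qed.

Lemma dvd_coef0 (r f : {poly F}) : r %| f -> f`_0 != 0 -> r`_0 != 0.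
Proof. by case/dvdpP=> s ->; rewrite coef0M mulf_eq0 negb_or => /andP[]. Qed.

Lemma pstar_dvd (r f : {poly F}) : r %| f -> f`_0 != 0 -> pstar q r %| pstar q f.
Proof.
move=> d h; case/dvdpP: d h => s -> h.
rewrite coef0M mulf_eq0 negb_or in h; case/andP: h => h1 h2.
by rewrite pstarM // dvdp_mull.
Qed.

Lemma irr_monic_eq (r g : {poly F}) : r \is monic -> g \is monic ->
  irreducible_poly g -> size r != 1%N -> r %| g -> r = g.
Proof. by move=> mr mg ig s d; apply/eqP; rewrite -eqp_monic //; apply: ig. Qed.

Lemma irr_prime (r g h : {poly F}) : irreducible_poly r -> r %| g * h ->
  r %| g \/ r %| h.
Proof.
move=> ir d; case: (irredp_XsubCP ir (dvdp_gcdl r g)) => e.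
  by right; rewrite gcdp_eqp1 in e; rewrite -(Gauss_dvdpr _ e).
by left; rewrite -(eqp_dvdl _ e) dvdp_gcdr.
Qed.

Definition Kp (r : {poly F}) := if r == pstar q r then r else r * pstar q r.

Lemma Phi_K (f r : {poly F}) : inPhi q f -> r \is monic -> irreducible_poly r ->
  r %| f -> f = Kp r.
Proof.
move=> hf mr ir d; have [mf f0 sf] := inPhi_props hf.
have r0 := dvd_coef0 d f0.
have sr : size r != 1%N by case: ir => /gtn_eqF ->.
case: hf => [[_ [ig _]] | [g [mg ig g0 gn ef]]].
  have e := irr_monic_eq mr mf ig sr d; subst r.
  by rewrite /Kp sf eqxx.
have g0' := pstar_coef0 badd binv g0.
have d0 := d; rewrite ef in d0.
case: (irr_prime ir d0) => d'.
  have e := irr_monic_eq mr mg ig sr d'; subst r.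
  by rewrite /Kp ifF //; apply/eqP.
have d2 : pstar q r %| g by rewrite -(pstarK badd binv mg g0) pstar_dvd.
have e : pstar q r = g.
  apply: irr_monic_eq => //; first exact: pstar_monic.
  by rewrite pstar_size.
have e2 : r = pstar q g by rewrite -e pstarK.
rewrite /Kp ifF; first by rewrite ef e2 pstarK // mulrC.
by apply/negbTE/eqP => h; apply: gn; rewrite -e2 -e -h.
Qed.

Lemma irr_scale (r : {poly F}) c : c != 0 -> irreducible_poly r -> irreducible_poly (c *: r).
Proof.
move=> c0 [s ir]; split; first by rewrite size_scale.
move=> p sp d; rewrite (eqp_dvdr _ (eqp_scale _ c0)) in d.
by apply: (@eqp_trans _ r); [apply: ir | rewrite eqp_sym eqp_scale].
Qed.

Lemma exists_irr_aux n (p : {poly F}) : (size p <= n)%N -> (1 < size p)%N ->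
  exists r, irreducible_poly r /\ r %| p.
Proof.
elim: n p => [|n IH] p hs h1; first by move: (leq_trans h1 hs).
case: (classic (irreducible_poly p)) => [ip|nip]; first by exists p; split.
have : ~ (forall r : {poly F}, size r != 1%N -> r %| p -> r %= p).
  by move=> H; apply: nip; split.
move/not_all_ex_not=> [r hr].
have sr : size r != 1%N by apply/negP => e; apply: hr => H; rewrite e in H.
have dr : r %| p by apply/negPn/negP => nd; apply: hr => _ H; rewrite H in nd.
have ner : ~~ (r %= p) by apply/negP => e; apply: hr => _ _.
have pn0 : p != 0 by rewrite -size_poly_gt0 (ltn_trans _ h1).
have rn0 : r != 0 by apply: contraNneq pn0 => e; move: dr; rewrite e dvd0p.
have lt : (size r < size p)%N.
  rewrite ltn_neqAle dvdp_leq // andbT; apply: contra ner => /eqP e.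
  by rewrite -dvdp_size_eqp // e.
have [r' [ir' d']] : exists r', irreducible_poly r' /\ r' %| r.
  apply: IH; first by rewrite -ltnS (leq_trans lt hs).
  by rewrite ltn_neqAle eq_sym sr size_poly_gt0.
by exists r'; split => //; exact: dvdp_trans d' dr.
Qed.

Lemma exists_irr (p : {poly F}) : (1 < size p)%N ->
  exists r, [/\ r \is monic, irreducible_poly r & r %| p].
Proof.
move=> h; have [r [ir d]] := exists_irr_aux (leqnn _) h.
have rn0 := irredp_neq0 ir.
have c0 : (lead_coef r)^-1 != 0 by rewrite invr_eq0 lead_coef_eq0.
exists ((lead_coef r)^-1 *: r); split.
- by rewrite monicE lead_coefZ mulVf ?lead_coef_eq0.
- exact: irr_scale.
- by rewrite (eqp_dvdl _ (eqp_scale _ c0)).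
Qed.

Lemma Phi_coprime (f1 f2 : {poly F}) : inPhi q f1 -> inPhi q f2 -> f1 <> f2 ->
  coprimep f1 f2.
Proof.
move=> h1 h2 ne; case: (boolP (coprimep f1 f2)) => // nc; exfalso.
have [m1 _ _] := inPhi_props h1.
have dn0 : gcdp f1 f2 != 0 by rewrite gcdp_eq0 negb_and monic_neq0.
have hs : (1 < size (gcdp f1 f2))%N.
  by rewrite ltn_neqAle eq_sym -coprimep_def nc size_poly_gt0.
have [r [mr ir d]] := exists_irr hs.
apply: ne; rewrite (Phi_K h1 mr ir (dvdp_trans d (dvdp_gcdl _ _))).
by rewrite (Phi_K h2 mr ir (dvdp_trans d (dvdp_gcdr _ _))).
Qed.
End Phi.
Section Lin.
Variables (F : finFieldType) (q n : nat).
Local Notation bar := (@fbar F q).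
Hypothesis badd : forall x y : F, bar (x + y) = bar x + bar y.
Hypothesis binv : forall x : F, bar (bar x) = x.
Variable gamma : 'rV[F]_n.+1 -> 'rV[F]_n.+1 -> F.
Hypothesis hl : forall a v v' w, gamma (a *: v + v') w = a * gamma v w + gamma v' w.
Hypothesis hr : forall a v w w', gamma v (a *: w + w') = bar a * gamma v w + gamma v w'.
Variable X : 'M[F]_n.+1.
Hypothesis hX : forall v w, gamma (v *m X) (w *m X) = gamma v w.

Lemma gamma0l w : gamma 0 w = 0.
Proof.
apply: (@addrI _ (gamma 0 w)); rewrite addr0.
by rewrite -{1}(mul1r (gamma 0 w)) -hl scale1r addr0.
Qed.
Lemma gamma0r v : gamma v 0 = 0.
Proof.
apply: (@addrI _ (gamma v 0)); rewrite addr0.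
by rewrite -{1}(mul1r (gamma v 0)) -(bar1 F q) -hr scale1r addr0.
Qed.
Lemma gammaZl a v w : gamma (a *: v) w = a * gamma v w.
Proof. by rewrite -[a *: v]addr0 hl gamma0l addr0. Qed.

Lemma gamma_suml m (c : 'I_m -> F) (vs : 'I_m -> 'rV[F]_n.+1) w :
  gamma (\sum_(i < m) c i *: vs i) w = \sum_(i < m) c i * gamma (vs i) w.
Proof.
elim: m c vs => [|m IH] c vs; first by rewrite !big_ord0 gamma0l.
by rewrite !big_ord_recr /= addrC hl addrC IH.
Qed.
Lemma gamma_sumr m (c : 'I_m -> F) (ws : 'I_m -> 'rV[F]_n.+1) v :
  gamma v (\sum_(i < m) c i *: ws i) = \sum_(i < m) bar (c i) * gamma v (ws i).
Proof.
elim: m c ws => [|m IH] c ws; first by rewrite !big_ord0 gamma0r.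
by rewrite !big_ord_recr /= addrC hr addrC IH.
Qed.

Lemma gammaXk k v w : gamma (v *m X ^+ k) (w *m X ^+ k) = gamma v w.
Proof.
elim: k => [|k IH]; first by rewrite expr0 !mulmx1.
by rewrite exprSr -!mulmxE !mulmxA hX IH.
Qed.

Lemma hmx_expand d (p : {poly F}) : (size p <= d.+1)%N ->
  horner_mx X p = \sum_(a < d.+1) p`_a *: X ^+ a.
Proof.
move=> hs; rewrite {1}(poly_expand hs) linear_sum; apply: eq_bigr => a _.
by rewrite linearZ rmorphXn /= horner_mx_X.
Qed.

Lemma adjoint d (p : {poly F}) v w : (size p <= d.+1)%N ->
  gamma (v *m X ^+ d) (w *m horner_mx X p) = gamma (v *m horner_mx X (Rv q d p)) w.
Proof.
move=> hs; rewrite (hmx_expand hs) (Rv_expand badd hs) mulmx_sumr.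
rewrite linear_sum mulmx_sumr.
under eq_bigr do rewrite -scalemxAr.
under [in RHS]eq_bigr do rewrite linearZ rmorphXn /= horner_mx_X -scalemxAr.
rewrite gamma_sumr gamma_suml; apply: eq_bigr => a _; congr (_ * _).
have ha : (a <= d)%N by rewrite -ltnS.
by rewrite -{1}(subnK ha) exprD -mulmxE mulmxA gammaXk.
Qed.
End Lin.
Unset Implicit Arguments.
Lemma coef0X (F : finFieldType) (p : {poly F}) k : (p ^+ k)`_0 = p`_0 ^+ k.
Proof.
elim: k => [|k IH]; first by rewrite !expr0 coef1.
by rewrite !exprS coef0M IH.
Qed.

Theorem lemma6p1p4 (q u : nat) (F : finFieldType) (n : nat)
  (hu : u = 1%N \/ u = 2%N) (hF : #|F| = (q ^ u)%N)
  (beta : 'rV[F]_n.+1 -> 'rV[F]_n.+1 -> F)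
  (hbeta : is_form q u beta) (hnd : nondeg_form beta)
  (X : 'M[F]_n.+1) (hX : in_isom_group beta X)
  (h : nat) (f : 'I_h -> {poly F}) (e : 'I_h -> nat)
  (hfPhi : forall i, inPhi q (f i)) (hfinj : injective f)
  (he : forall i, (0 < e i)%N)
  (hmin : mxminpoly X = \prod_(i < h) f i ^+ e i)
  (g : 'M[F]_n.+1) (hg : g \in unitmx)
  (gamma : 'rV[F]_n.+1 -> 'rV[F]_n.+1 -> F)
  (hgamma : forall v w, gamma v w = beta (v *m g) (w *m g))
  (hgX : forall v w, gamma (v *m X) (w *m X) = gamma v w)
  (i j : 'I_h) (hij : f i <> pstar q (f j)) :
  forall v w : 'rV[F]_n.+1,
    v *m horner_mx X (f i ^+ e i) = 0 ->
    w *m horner_mx X (f j ^+ e j) = 0 ->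
    gamma v w = 0.
Proof.
move=> v w hv hw.
case: hbeta => [[hbl hbr] _].
have v0n0 : (const_mx 1 : 'rV[F]_n.+1) != 0.
  by apply/eqP => /matrixP/(_ 0 0); rewrite !mxE => /eqP; rewrite oner_eq0.
have [w0 hw0] : exists w0, beta (const_mx 1) w0 != 0.
  apply: NNPP => H.
  have : (const_mx 1 : 'rV[F]_n.+1) = 0.
    apply: hnd => w1; apply: NNPP => H2; apply: H; exists w1; exact/eqP.
  by move/eqP: v0n0.
pose v1 := (beta (const_mx 1) w0)^-1 *: (const_mx 1 : 'rV[F]_n.+1).
have hv1 : beta v1 w0 = 1 by rewrite /v1 (gammaZl hbl) mulVf.
have badd : forall x y : F, fbar q (x + y) = fbar q x + fbar q y.
  move=> x y; apply: (@addIr _ (beta v1 0)).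
  have := hbr (x + y) v1 w0 0; rewrite hv1 mulr1 => <-.
  rewrite scalerDl addr0 -[y *: w0]addr0 hbr hbr hv1 !mulr1 addrA.
  by rewrite (gamma0r hbr) !addr0.
have binv : forall x : F, fbar q (fbar q x) = x.
  move=> x; rewrite /fbar -exprM.
  case: hu => hu; subst u.
    by rewrite expn1 in hF; rewrite exprM -hF !expf_card.
  by rewrite mulnn -hF expf_card.
have hgl : forall a v v' w, gamma (a *: v + v') w = a * gamma v w + gamma v' w.
  by move=> a v' v'' w'; rewrite !hgamma mulmxDl -scalemxAl hbl.
have hgr : forall a v w w', gamma v (a *: w + w') = fbar q a * gamma v w + gamma v w'.
  by move=> a v' w' w''; rewrite !hgamma mulmxDl -scalemxAl hbr.
have [_ fj0 sfj] := inPhi_props badd binv (hfPhi j).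
have hneq : f i <> f j by rewrite sfj in hij.
have cop := Phi_coprime badd binv (hfPhi i) (hfPhi j) hneq.
have copAB : coprimep (f i ^+ e i) (f j ^+ e j).
  by apply: coprimep_expl; apply: coprimep_expr.
set B := f j ^+ e j in hw copAB.
have B0 : B`_0 != 0 by rewrite /B coef0X expf_neq0.
have Bn0 : B != 0 by apply: contraNneq B0 => ->; rewrite coef0.
have BE : pstar q B = B by rewrite /B pstarX // sfj.
have RvB : Rv q (size B).-1 B = fbar q B`_0 *: B.
  have := pstarE q Bn0; rewrite BE.
  set c := fbar q B`_0; set R := Rv q (size B).-1 B => E.
  rewrite {1}E scalerA mulfV ?scale1r //.
  by rewrite (bar_eq0 badd binv).
have key : forall u', gamma (u' *m horner_mx X B) w = 0.
  move=> u'.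
  have := adjoint badd hgl hgr hgX u' w (d := (size B).-1) (p := B).
  rewrite -polySpred // => /(_ (leqnn _)); rewrite hw (gamma0r hgr) RvB linearZ /=.
  rewrite -scalemxAr (gammaZl hgl) => /esym /eqP; rewrite mulf_eq0 => /orP[|/eqP //].
  by rewrite (bar_eq0 badd binv) (negbTE B0).
case/Bezout_eq1_coprimepP: copAB => [[u1 u2] /= hb].
have : v = (v *m horner_mx X u2) *m horner_mx X B.
  have := congr1 (horner_mx X) hb; rewrite [u1 * _]mulrC rmorph1 rmorphD !rmorphM /= => e1.
  have e2 : (1%:M : 'M[F]_n.+1) = horner_mx X (f i ^+ e i) *m horner_mx X u1
     + horner_mx X u2 *m horner_mx X B by exact: (esym e1).
  by rewrite -[v in LHS]mulmx1 e2 mulmxDr !mulmxA hv mul0mx add0r.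
by move=> ->; apply: key.
Qed.
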